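(* Let $q$ be a prime power, $d$ a positive divisor of $q-1$, $m=\frac{q-1}{d}$, $\omega$ a primitive root of $\mathbb{F}_q$ and $\zeta=\omega^{m}$. Let $P\in\mathbb{F}_q[T]$ be nonzero with $\deg P\le q-1$. Let $\rho_0<\rho_1<\dots<\rho_{k-1}$ be the distinct values $\operatorname{rem}(n)$ where $n$ ranges over the degrees of the monomials of $P$ with nonzero coefficient, and $\operatorname{rem}(n)$ denotes the unique element of $\{1,\dots,m\}$ congruent to $n$ mod $m$. For $\ell=0,\dots,k-1$ let $\vec v_\ell\in\mathbb{F}_q^d$ have $j$-th entry ($j=0,\dots,d-1$) equal to the coefficient of $T^{jm+\rho_\ell}$ in $P$, and let $\vec b_\ell=(b^{(\ell)}_0,\dots,b^{(\ell)}_{d-1})\in\mathbb{F}_q^d$ be the unique vector with $(\vec v_\ell)_j=\frac1d\sum_{i=0}^{d-1}\zeta^{-ij}b^{(\ell)}_i$ for all $j$. Put $S_0=\{i: b^{(0)}_i\neq0\text{ or } b^{(\ell')}_i=0\text{ for all }\ell'\}$ and $S_\ell=\{i:b^{(\ell)}_i\neq0\}$ for $\ell>0$. Then $P$ is the polynomial form of an index $d$ generalized cyclotomic mapping of $\mathbb{F}_q$ if and only if $P(0)=0$, $k\le d$, and the sets $S_0,\dots,S_{k-1}$ are pairwise disjoint with union $\{0,\dots,d-1\}$. In that case, letting $\ell(i)$ be the index with $i\in S_{\ell(i)}$, $P$ is the polynomial form of $f_\omega(\vec a,\vec r)$ with $a_i=b^{(\ell(i))}_i$ and $r_i=\rho_{\ell(i)}$.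 (The zero polynomial is the polynomial form of $f_\omega((0,\dots,0),(1,\dots,1))$.)
   Context: Let $C_i=\omega^iC$ where $C$ is the index $d$ subgroup of $\mathbb{F}_q^{\ast}$. For $\vec a\in\mathbb{F}_q^d$ and $\vec r\in\{1,\dots,m\}^d$, $f_\omega(\vec a,\vec r):\mathbb{F}_q\to\mathbb{F}_q$ maps $0\mapsto0$ and $x\mapsto a_ix^{r_i}$ for $x\in C_i$; such maps are the index $d$ generalized cyclotomic mappings. The polynomial form of a function $f:\mathbb{F}_q\to\mathbb{F}_q$ is the unique polynomial of degree at most $q-1$ that agrees with $f$ on $\mathbb{F}_q$. *)

(* Defs.v *)
From mathcomp Require Import all_boot all_order all_algebra all_field.
Set Implicit Arguments. Unset Strict Implicit. Unset Printing Implicit Defensive.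
Import GRing.Theory.
Local Open Scope ring_scope.

Section GCM.
Variable F : finFieldType.

Definition idx_subgroup (d : nat) : {set F} :=
  [set x : F | [exists y : F, (y != 0) && (x == y ^+ d)]].

Definition cyc_class (d : nat) (w : F) (i : nat) : {set F} :=
  [set x : F | [exists c in idx_subgroup d, x == w ^+ i * c]].

Definition gcm_map (d : nat) (w : F) (a : 'I_d -> F) (r : 'I_d -> nat) (x : F) : F :=
  if x == 0 then 0 else
  match [pick i : 'I_d | x \in cyc_class d w i] with
  | Some i => a i * x ^+ r i
  | None => 0
  end.

Definition gcm_m (d : nat) : nat := (#|F|.-1 %/ d)%N.

Definition is_gcm (d : nat) (w : F) (f : F -> F) : Prop :=
  exists (a : 'I_d -> F) (r : 'I_d -> nat),
    (forall i, (1 <= r i <= gcm_m d)%N) /\ f =1 gcm_map w a r.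

Definition poly_form (P : {poly F}) (f : F -> F) : Prop :=
  (size P <= #|F|)%N /\ forall x : F, P.[x] = f x.

Definition remm (m n : nat) : nat := if (n %% m == 0)%N then m else (n %% m)%N.

Definition rhos (m : nat) (P : {poly F}) : seq nat :=
  sort leq (undup [seq remm m n | n <- iota 0 (size P) & P`_n != 0]).

Definition vvec (d : nat) (P : {poly F}) (l : nat) (j : 'I_d) : F :=
  P`_(j * gcm_m d + nth 0%N (rhos (gcm_m d) P) l).

Definition Sset (d k : nat) (b : nat -> 'I_d -> F) (l : nat) : {set 'I_d} :=
  if l == 0%N then [set i : 'I_d | (b 0%N i != 0) || [forall l' : 'I_k, b l' i == 0]]
  else [set i : 'I_d | b l i != 0].

End GCM.

(* Main.v *)
Require Import Defs.
From mathcomp Require Import all_boot all_order all_algebra all_field.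
From mathcomp Require Import zify ring.
Import GRing.Theory.
Local Open Scope ring_scope.

Lemma remm_dec (m n : nat) : (0 < m)%N -> (0 < n)%N ->
  n = ((n.-1) %/ m * m + remm m n)%N.
Proof.
move=> hm hn; rewrite /remm.
have e1 := divn_eq n.-1 m.
set q := (n.-1 %/ m)%N in e1 *; set s := (n.-1 %% m)%N in e1 *.
have hs : (s < m)%N by rewrite ltn_mod.
have en : n = (q * m + s.+1)%N by lia.
have -> : (n %% m = s.+1 %% m)%N by rewrite en modnMDl.
case: (ltngtP s.+1 m) => h.
- by rewrite modn_small // (negbTE (lt0n _)) ?lt0n //; lia.
- lia.
- by rewrite h modnn eqxx; lia.
Qed.

Lemma remm_eq (m j r : nat) : (1 <= r <= m)%N -> remm m (j * m + r) = r.
Proof.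
move=> /andP[h1 h2]; rewrite /remm modnMDl.
case: (ltngtP r m) => h.
- by rewrite modn_small //; case: r h1 {h2 h}.
- lia.
- by rewrite h modnn eqxx.
Qed.
Section S.
Variable F : finFieldType.
Variables (d : nat) (w : F).
Hypotheses (d_gt0 : (0 < d)%N) (d_dvd : (d %| #|F|.-1)%N)
  (wprim : #|F|.-1.-primitive_root w).
Local Notation m := (gcm_m F d).
Local Notation z := (w ^+ gcm_m F d).

Lemma nE : #|F|.-1 = (d * m)%N.
Proof. by rewrite /gcm_m mulnC divnK. Qed.

Lemma cardE : #|F| = (d * m).+1.
Proof. by rewrite -nE prednK // (ltn_trans _ (finNzRing_gt1 F)). Qed.

Lemma m_gt0 : (0 < m)%N.
Proof.
have := finNzRing_gt1 F; rewrite cardE ltnS muln_gt0 => /andP[].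
by [].
Qed.

Lemma zprim : d.-primitive_root z.
Proof.
have := exp_prim_root wprim m; rewrite nE gcdnMl mulnK //; exact: m_gt0.
Qed.

Lemma dR_neq0 : d%:R != 0 :> F.
Proof.
have [p pp pc] := finPcharP F.
rewrite -(dvdn_pcharf pc).
apply/negP => hd; move: (prim_root_pcharF zprim hd); by rewrite pc.
Qed.

Lemma w_neq0 : w != 0.
Proof.
apply/eqP => h; have := prim_expr_order wprim; rewrite h nE expr0n.
rewrite muln_eq0 (negbTE (lt0n_neq0 d_gt0)) (negbTE (lt0n_neq0 m_gt0)) /=.
by move/eqP; rewrite eq_sym oner_eq0.
Qed.

Lemma nonzero_pow x : x != 0 -> exists e : 'I_(#|F|.-1), x = w ^+ e.
Proof.
move=> hx.
have h : x ^+ #|F|.-1 = 1.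
  apply: (mulIf hx); rewrite mul1r -exprSr prednK ?expf_card //.
  exact: (ltn_trans _ (finNzRing_gt1 F)).
by have [e ->] := prim_rootP wprim h; exists e.
Qed.

Lemma class_exp {i : nat} {x : F} : x \in cyc_class d w i -> x != 0 /\ x ^+ m = z ^+ i.
Proof.
rewrite inE => /existsP[c /andP[]]; rewrite inE => /existsP[y /andP[hy /eqP ->]] /eqP ->.
split; first by rewrite mulf_neq0 ?expf_neq0 // w_neq0.
rewrite exprMn -(exprM y).
have -> : y ^+ (d * m) = 1.
  rewrite -nE; apply: (mulIf hy); rewrite mul1r -exprSr prednK ?expf_card //.
  exact: (ltn_trans _ (finNzRing_gt1 F)).
by rewrite mulr1 -!exprM mulnC.
Qed.

Lemma class_pow (i t : nat) : w ^+ (i + d * t) \in cyc_class d w i.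
Proof.
rewrite /cyc_class inE; apply/existsP; exists ((w ^+ t) ^+ d); apply/andP; split; last first.
  by rewrite exprD -exprM (mulnC t d).
rewrite /idx_subgroup inE; apply/existsP; exists (w ^+ t).
by rewrite eqxx andbT; apply: expf_neq0; apply: w_neq0.
Qed.

Lemma class_ex x : x != 0 -> exists i : 'I_d, x \in cyc_class d w i.
Proof.
move=> /nonzero_pow [e ->].
exists (Ordinal (ltn_pmod e d_gt0)) => /=.
rewrite {1}(divn_eq e d) addnC mulnC; exact: class_pow.
Qed.

Lemma class_uniq {i j : 'I_d} {x : F} :
  x \in cyc_class d w i -> x \in cyc_class d w j -> i = j.
Proof.
move=> /class_exp [_ h1] /class_exp [_]; rewrite h1 => /eqP.
rewrite (eq_prim_root_expr zprim) !modn_small // => /eqP h; exact: val_inj.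
Qed.

Lemma gcm_map_class a r (i : 'I_d) x :
  x \in cyc_class d w i -> gcm_map w a r x = a i * x ^+ r i.
Proof.
move=> hx; have [hx0 _] := class_exp hx.
rewrite /gcm_map (negbTE hx0).
case: pickP => [j hj | /(_ i)]; last by rewrite hx.
by rewrite (class_uniq hj hx).
Qed.

Lemma geo (i i' : 'I_d) :
  \sum_(j < d) (z ^+ (i' * j))^-1 * z ^+ (i * j) = if i' == i then d%:R else 0.
Proof.
have hz : z != 0 by rewrite expf_neq0 ?w_neq0.
under eq_bigr => j _ do rewrite !exprM -exprVn -exprMn.
case: eqP => [-> | hne].
  rewrite (eq_bigr (fun _ => 1)) => [|j _]; first by rewrite sumr_const card_ord.
  by rewrite mulVf ?expr1n // expf_neq0.
set u := _ * _.
have hu1 : u != 1.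
  apply/eqP => hu; apply: hne; apply: val_inj; apply/eqP.
  have := mulVKf (expf_neq0 i' hz) (z ^+ i); rewrite -/u hu mulr1 => /eqP.
  by rewrite (eq_prim_root_expr zprim) !modn_small // eq_sym.
have hud : u ^+ d = 1.
  by rewrite /u exprMn exprVn (exprAC z i' d) (exprAC z i d) (prim_expr_order zprim) !expr1n invr1 mulr1.
have := subrX1 u d; rewrite hud subrr => /esym /eqP; rewrite mulf_eq0 subr_eq0.
by rewrite (negbTE hu1) /= => /eqP.
Qed.

Lemma dft (bb : 'I_d -> F) (i : 'I_d) :
  \sum_(j < d) ((d%:R)^-1 * \sum_(i' < d) ((z ^+ (i' * j))^-1 * bb i')) * z ^+ (i * j)
  = bb i.
Proof.
under eq_bigr => j _ do rewrite -mulrA big_distrl /=.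
rewrite -big_distrr /= exchange_big /=.
under eq_bigr => i' _ do (under eq_bigr => j _ do rewrite mulrAC; rewrite -big_distrl /= geo).
rewrite (bigD1 i) //= eqxx big1 ?addr0.
  by rewrite mulrA mulVf ?dR_neq0 // mul1r.
by move=> i' /negbTE ->; rewrite mul0r.
Qed.


Lemma sum_split (g : nat -> F) (a c : nat) :
  \sum_(t < a * c) g t = \sum_(j < a) \sum_(r < c) g (j * c + r)%N.
Proof.
elim: a => [|a IH]; first by rewrite mul0n !big_ord0.
rewrite big_ord_recr /= -IH mulSnr.
rewrite -!(big_mkord xpredT).
rewrite (big_cat_nat (n := a * c)) ?leq_addr //=.
congr (_ + _).
rewrite (big_addn 0 (a * c + c) (a * c)) addKn big_mkord.
by apply: eq_bigr => r _; rewrite addnC.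
Qed.

Lemma sum_shift (g : nat -> F) n : \sum_(r < n) g r.+1 = \sum_(s <- iota 1 n) g s.
Proof.
have -> : iota 1 n = map (addn 1) (iota 0 n) by rewrite -iotaDl.
by rewrite big_map -val_enum_ord big_map big_enum.
Qed.

Variable P : {poly F}.
Local Notation rs := (rhos m P).
Local Notation k := (size (rhos m P)).
Local Notation rho l := (nth 0%N (rhos m P) l).

Lemma rhos_uniq : uniq rs.
Proof. by rewrite /rhos sort_uniq undup_uniq. Qed.

Lemma rhos_mem r : r \in rs ->
  exists2 n, (n < size P)%N & (P`_n != 0) /\ remm m n = r.
Proof.
rewrite /rhos mem_sort mem_undup => /mapP[n]; rewrite mem_filter mem_iota.
by move=> /andP[hn /andP[_ hs]] ->; exists n.
Qed.

Lemma remm_range n : (1 <= remm m n <= m)%N.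
Proof.
have hm := m_gt0; have := ltn_mod n m; rewrite hm /remm => hl.
case: eqP => h; lia.
Qed.

Lemma rhos_range r : r \in rs -> (1 <= r <= m)%N.
Proof. by move=> /rhos_mem [n _ [_ <-]]; apply: remm_range. Qed.

Lemma mem_rhos n : (n < size P)%N -> P`_n != 0 -> remm m n \in rs.
Proof.
move=> hn hc; rewrite /rhos mem_sort mem_undup; apply/mapP; exists n => //.
by rewrite mem_filter mem_iota hc /= add0n hn.
Qed.

Lemma coef_notin j r : (1 <= r <= m)%N -> r \notin rs -> P`_(j * m + r) = 0.
Proof.
move=> hr hn; apply/eqP; apply: contraNT hn => h.
rewrite -(@remm_eq m j r hr); apply: mem_rhos => //.
rewrite ltnNge; apply: contra h => /leq_sizeP /(_ _ (leqnn _)) ->.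
by rewrite eqxx.
Qed.

Variable b : nat -> 'I_d -> F.
Hypothesis hsz : (size P <= #|F|)%N.
Hypothesis hb : forall (l : nat) (j : 'I_d), (l < k)%N ->
  vvec P l j = (d%:R)^-1 * \sum_(i < d) ((z ^+ (i * j))^-1 * b l i).

Lemma KF (i : 'I_d) x : x ^+ m = z ^+ i ->
  P.[x] = P`_0 + \sum_(l < k) b l i * x ^+ rho l.
Proof.
move=> hx.
rewrite (horner_coef_wide _ hsz) cardE big_ord_recl /= expr0 mulr1.
congr (_ + _).
rewrite (eq_bigr (fun t : 'I_ _ => P`_t.+1 * x ^+ t.+1)); last first.
  by move=> t _.
rewrite (sum_split (fun t => P`_t.+1 * x ^+ t.+1)).
have term j r : P`_(j * m + r).+1 * x ^+ (j * m + r).+1 =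
    x ^+ r.+1 * (P`_(j * m + r.+1) * z ^+ (i * j)).
  rewrite -addnS exprD exprM exprAC hx -exprM; ring.
rewrite (eq_bigr (fun j : 'I_d => \sum_(r < m) x ^+ r.+1 * (P`_(j * m + r.+1) * z ^+ (i * j)))); last first.
  by move=> j _; apply: eq_bigr => r _; exact: term.
rewrite exchange_big /=.
under eq_bigr => r _ do rewrite -big_distrr /=.
rewrite (sum_shift (fun s => x ^+ s * \sum_(j < d) P`_(j * m + s) * z ^+ (i * j))).
rewrite (bigID (fun s => s \in rs)) /= [X in _ + X]big1_seq ?addr0; last first.
  move=> s /andP[hs]; rewrite mem_iota => /andP[h1 h2].
  rewrite big1 ?mulr0 // => j _; rewrite coef_notin ?mul0r //.
  by rewrite h1 -ltnS -(addn1 m) addnC.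
rewrite -big_filter.
rewrite (perm_big rs); last first.
  apply: uniq_perm; first by rewrite filter_uniq // iota_uniq.
    exact: rhos_uniq.
  move=> s; rewrite mem_filter mem_iota.
  case hs: (s \in rs); rewrite ?andbF //=.
  have /andP[h1 h2] := rhos_range _ hs; apply/andP; split => //.
rewrite (big_nth 0%N) big_mkord.
apply: eq_bigr => l _.
rewrite mulrC; congr (_ * _).
rewrite -[RHS](dft (b l) i).
by apply: eq_bigr => j _; rewrite -hb.
Qed.


Lemma forward (a : 'I_d -> F) (r : 'I_d -> nat)
  (hr : forall i, (1 <= r i <= m)%N) (hf : forall x, P.[x] = gcm_map w a r x)
  (i : 'I_d) (l : 'I_k) : b l i = if rho l == r i then a i else 0.
Proof.
have P0 : P`_0 = 0 by rewrite -horner_coef0 hf /gcm_map eqxx.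
set Q : {poly F} := \sum_(l < k) b l i *: 'X^(rho l) - a i *: 'X^(r i).
have Qx x : Q.[x] = \sum_(l < k) b l i * x ^+ rho l - a i * x ^+ r i.
  rewrite /Q hornerD hornerN horner_sum hornerZ hornerXn.
  by congr (_ - _); apply: eq_bigr => l' _; rewrite hornerZ hornerXn.
have rho_pos (l' : 'I_k) : (0 < rho l')%N.
  by have /andP[] := rhos_range _ (mem_nth 0%N (ltn_ord l')).
have hQ : Q = 0.
  apply/eqP; apply: contraT => hQ.
  set rs0 := 0 :: [seq w ^+ (i + d * t) | t <- iota 0 m].
  have hroots : all (root Q) rs0.
    rewrite /= ; apply/andP; split.
      rewrite /root Qx big1 ?sub0r.
        by have /andP[h1 _] := hr i; rewrite expr0n eqn0Ngt h1 mulr0 oppr0.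
      by move=> l' _; rewrite expr0n eqn0Ngt rho_pos mulr0.
    apply/allP => y /mapP[t _ ->]; rewrite /root Qx.
    have hc := class_pow i t; have [_ hm] := class_exp hc.
    have := KF _ _ hm; rewrite hf (gcm_map_class _ _ _ _ hc) P0 add0r => <-.
    by rewrite subrr.
  have huniq : uniq rs0.
    rewrite /= map_inj_in_uniq ?iota_uniq ?andbT.
      by apply/mapP => -[t _] /esym /eqP; rewrite expf_eq0 (negbTE w_neq0) andbF.
    move=> t1 t2; rewrite !mem_iota !add0n => /andP[_ h1] /andP[_ h2] /eqP.
    rewrite (eq_prim_root_expr wprim) nE !modn_small.
    - by move=> /eqP /addnI /eqP; rewrite eqn_pmul2l // => /eqP.
    - have := ltn_ord i; nia.
    - have := ltn_ord i; nia.
  have := max_poly_roots hQ hroots huniq.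
  rewrite /= size_map size_iota.
  rewrite ltnNge => /negP H; exfalso; apply: H.
  rewrite /Q; apply: leq_trans (size_polyD _ _) _; rewrite geq_max size_polyN.
  apply/andP; split.
    apply: (big_ind (fun p : {poly F} => size p <= m.+1)%N) => //.
    - by rewrite size_poly0.
    - by move=> p1 p2 h1 h2; apply: leq_trans (size_polyD _ _) _; rewrite geq_max h1 h2.
    move=> l' _; apply: leq_trans (size_scale_leq _ _) _; rewrite size_polyXn ltnS.
    by have /andP[] := rhos_range _ (mem_nth 0%N (ltn_ord l')).
  apply: leq_trans (size_scale_leq _ _) _; rewrite size_polyXn ltnS.
  by have /andP[] := hr i.
have := congr1 (fun p : {poly F} => p`_(rho l)) hQ.
rewrite /= coef0 /Q coefB coef_sum coefZ coefXn.
rewrite (bigD1 l) //= coefZ coefXn eqxx mulr1 big1 ?addr0; last first.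
  move=> l' hl'; rewrite coefZ coefXn nth_uniq ?ltn_ord ?rhos_uniq //.
  have /negbTE -> : (l : nat) != l' by rewrite eq_sym.
  by rewrite mulr0.
move/eqP; rewrite subr_eq0 => /eqP ->.
by case: eqP; rewrite ?mulr1 ?mulr0.
Qed.

Lemma k_pos : P != 0 -> (0 < k)%N.
Proof.
move=> hP.
have hs : (0 < size P)%N by rewrite size_poly_gt0.
have h1 : ((size P).-1 < size P)%N by rewrite ltn_predL.
have := mem_rhos _ h1.
rewrite -lead_coefE lead_coef_eq0 hP => /(_ isT).
by case: (rhos m P).
Qed.

Lemma exists_nz (P0 : P`_0 = 0) (l : 'I_k) : exists i, b l i != 0.
Proof.
have [n hn [hnz hrem]] := rhos_mem _ (mem_nth 0%N (ltn_ord l)).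
have n_pos : (0 < n)%N by rewrite lt0n; apply: contraNneq hnz => ->; rewrite P0.
have e := @remm_dec m n m_gt0 n_pos; rewrite hrem in e.
set j := (n.-1 %/ m)%N in e.
have hrl : (1 <= rho l)%N by have /andP[] := rhos_range _ (mem_nth 0%N (ltn_ord l)).
have hj : (j < d)%N.
  have : (n <= d * m)%N by rewrite -ltnS -cardE (leq_trans hn hsz).
  rewrite -(ltn_pmul2r m_gt0) (mulnC d); nia.
case: (boolP [exists i, b l i != 0]) => [/existsP //|].
rewrite negb_exists => /forallP hall.
have := hb l (Ordinal hj) (ltn_ord l).
rewrite big1 ?mulr0; last by move=> i' _; move: (hall i'); rewrite negbK => /eqP ->; rewrite mulr0.
by rewrite /vvec /= -e => /eqP; rewrite (negbTE hnz).
Qed.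

Lemma disj_from
  (AM1 : forall i (l1 l2 : nat), (l1 < k)%N -> (l2 < k)%N ->
     b l1 i != 0 -> b l2 i != 0 -> l1 = l2)
  (l1 l2 : nat) : (l1 < k)%N -> (l2 < k)%N -> l1 <> l2 ->
  [disjoint Sset k b l1 & Sset k b l2].
Proof.
move=> h1 h2 hne; rewrite -setI_eq0; apply/eqP/setP => i; rewrite !inE /Sset.
case: (eqVneq l1 0%N) => [e1|n1]; case: (eqVneq l2 0%N) => [e2|n2]; rewrite !inE.
- by case: hne; rewrite e1 e2.
- apply/negP => /andP[/orP[h|/forallP h] h'].
    by case: hne; rewrite e1; apply: AM1 h h' => //; rewrite -e1.
  by move: (h (Ordinal h2)); rewrite /= (negbTE h').
- apply/negP => /andP[h' /orP[h|/forallP h]].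
    by case: hne; rewrite e2; apply: AM1 h' h => //; rewrite -e2.
  by move: (h (Ordinal h1)); rewrite /= (negbTE h').
- by apply/negP => /andP[h h']; apply: hne; apply: AM1 h h'.
Qed.

Lemma union_from (kp : (0 < k)%N) : (\bigcup_(l < k) Sset k b l) = [set: 'I_d].
Proof.
apply/setP => i; rewrite inE; apply/bigcupP.
case: (boolP [exists l : 'I_k, b l i != 0]) => [/existsP[l hl]|].
  exists l => //; rewrite /Sset; case: eqP => [e|_]; rewrite inE ?hl //.
  by rewrite -e hl.
rewrite negb_exists => /forallP hall.
exists (Ordinal kp) => //; rewrite /Sset /= inE; apply/orP; right.
by apply/forallP => l; move: (hall l); rewrite negbK.
Qed.

Lemma backward (P0 : P.[0] = 0)
  (hdisj : forall l1 l2 : nat, (l1 < k)%N -> (l2 < k)%N -> l1 <> l2 ->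
            [disjoint Sset k b l1 & Sset k b l2])
  (lf : 'I_d -> nat) (hlf : forall i, (lf i < k)%N /\ i \in Sset k b (lf i)) :
  poly_form P (gcm_map w (fun i => b (lf i) i) (fun i => rho (lf i))).
Proof.
split => // x; case: (eqVneq x 0) => [->|hx]; first by rewrite P0 /gcm_map eqxx.
have [i hi] := class_ex _ hx.
rewrite (gcm_map_class _ _ _ _ hi); have [_ hm] := class_exp hi.
rewrite (KF _ _ hm) -horner_coef0 P0 add0r.
have [hl hS] := hlf i.
rewrite (bigD1 (Ordinal hl)) //= big1 ?addr0 // => l hl'.
suff -> : b l i = 0 by rewrite mul0r.
apply/eqP; apply: contraT => hb'.
have hSl : i \in Sset k b l.
  rewrite /Sset; case: eqP => [e|_]; rewrite inE ?hb' //.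
  by rewrite -e hb'.
have hne : lf i <> l.
  by move=> e; move/negP: hl'; apply; apply/eqP; apply: val_inj; rewrite /= e.
have := hdisj _ _ hl (ltn_ord l) hne; rewrite -setI_eq0 => /eqP/setP/(_ i).
by rewrite !inE hS hSl.
Qed.


Lemma main (hP : P != 0) :
  ((exists2 f : F -> F, is_gcm d w f & poly_form P f) <->
     [/\ P.[0] = 0, (k <= d)%N,
         (forall l1 l2 : nat, (l1 < k)%N -> (l2 < k)%N -> l1 <> l2 ->
            [disjoint Sset k b l1 & Sset k b l2])
       & (\bigcup_(l < k) Sset k b l) = [set: 'I_d]])
  /\
  ([/\ P.[0] = 0, (k <= d)%N,
       (forall l1 l2 : nat, (l1 < k)%N -> (l2 < k)%N -> l1 <> l2 ->
          [disjoint Sset k b l1 & Sset k b l2])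
     & (\bigcup_(l < k) Sset k b l) = [set: 'I_d]] ->
   forall lf : 'I_d -> nat,
     (forall i, (lf i < k)%N /\ i \in Sset k b (lf i)) ->
     poly_form P (gcm_map w (fun i => b (lf i) i) (fun i => rho (lf i)))).
Proof.
have back : [/\ P.[0] = 0, (k <= d)%N,
       (forall l1 l2 : nat, (l1 < k)%N -> (l2 < k)%N -> l1 <> l2 ->
          [disjoint Sset k b l1 & Sset k b l2])
     & (\bigcup_(l < k) Sset k b l) = [set: 'I_d]] ->
   forall lf : 'I_d -> nat,
     (forall i, (lf i < k)%N /\ i \in Sset k b (lf i)) ->
     poly_form P (gcm_map w (fun i => b (lf i) i) (fun i => rho (lf i))).
  by move=> [P0 _ hd _] lf hlf; exact: backward.
split => //; split.
- move=> [f [a [r [hr hfe]]] [_ hf]].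
  have hf' : forall x, P.[x] = gcm_map w a r x by move=> x; rewrite hf hfe.
  have P0 : P`_0 = 0 by rewrite -horner_coef0 hf' /gcm_map eqxx.
  have AM1 : forall i (l1 l2 : nat), (l1 < k)%N -> (l2 < k)%N ->
      b l1 i != 0 -> b l2 i != 0 -> l1 = l2.
    move=> i l1 l2 h1 h2.
    rewrite (forward _ _ hr hf' i (Ordinal h1)) (forward _ _ hr hf' i (Ordinal h2)) /=.
    case: (rho l1 =P r i) => e1; last by rewrite eqxx.
    case: (rho l2 =P r i) => e2; last by rewrite eqxx.
    move=> _ _.
    by apply/eqP; rewrite -(nth_uniq 0%N h1 h2 rhos_uniq) e1 e2.
  split.
  + by rewrite horner_coef0.
  + have [g hg] : exists g : 'I_k -> 'I_d, forall l : 'I_k, b l (g l) != 0.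
      apply: (@fin_all_exists _ (fun _ : 'I_k => 'I_d) (fun (l : 'I_k) (i : 'I_d) => b l i != 0)).
      by move=> l; exact: exists_nz.
    have ginj : injective g.
      move=> l1 l2 e; apply: val_inj.
      apply: (AM1 (g l1) l1 l2 (ltn_ord l1) (ltn_ord l2) (hg l1)).
      by rewrite e; exact: hg.
    by have := leq_card g ginj; rewrite !card_ord.
  + exact: disj_from.
  + exact: union_from (k_pos hP).
- move=> hB; have [P0 _ hd hu] := hB.
  have [lf hlf] : exists lf : 'I_d -> 'I_k, forall i, i \in Sset k b (lf i).
    apply: (@fin_all_exists _ (fun _ : 'I_d => 'I_k) (fun (i : 'I_d) (l : 'I_k) => i \in Sset k b l)) => i.
    have : i \in \bigcup_(l < k) Sset k b l by rewrite hu inE.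
    by move/bigcupP => [l _ h]; exists l.
  exists (gcm_map w (fun i => b (lf i) i) (fun i => rho (lf i))).
    exists (fun i => b (lf i) i), (fun i => rho (lf i)); split => // i.
    exact: rhos_range _ (mem_nth 0%N (ltn_ord (lf i))).
  by apply: back => // i; split => //; exact: ltn_ord.
Qed.

End S.

Theorem theorem2 (F : finFieldType) (d : nat) (w : F) (P : {poly F})
    (b : nat -> 'I_d -> F) :
  (0 < d)%N -> (d %| #|F|.-1)%N ->
  #|F|.-1.-primitive_root w ->
  P != 0 -> (size P <= #|F|)%N ->
  (forall (l : nat) (j : 'I_d), (l < size (rhos (gcm_m F d) P))%N ->
     vvec P l j = (d%:R)^-1 *
       \sum_(i < d) ((w ^+ gcm_m F d) ^+ (i * j))^-1 * b l i) ->
  let k := size (rhos (gcm_m F d) P) in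
  let rho := fun l : nat => nth 0%N (rhos (gcm_m F d) P) l in
  ((exists2 f : F -> F, is_gcm d w f & poly_form P f) <->
     [/\ P.[0] = 0, (k <= d)%N,
         (forall l1 l2 : nat, (l1 < k)%N -> (l2 < k)%N -> l1 <> l2 ->
            [disjoint Sset k b l1 & Sset k b l2])
       & (\bigcup_(l < k) Sset k b l) = [set: 'I_d]])
  /\
  ([/\ P.[0] = 0, (k <= d)%N,
       (forall l1 l2 : nat, (l1 < k)%N -> (l2 < k)%N -> l1 <> l2 ->
          [disjoint Sset k b l1 & Sset k b l2])
     & (\bigcup_(l < k) Sset k b l) = [set: 'I_d]] ->
   forall lf : 'I_d -> nat,
     (forall i, (lf i < k)%N /\ i \in Sset k b (lf i)) ->
     poly_form P (gcm_map w (fun i => b (lf i) i) (fun i => rho (lf i)))).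
Proof.
move=> hd hdv hw hP hsz hb.
exact: (@main F d w hd hdv hw P b hsz hb hP).
Qed.
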